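(* Let $x_k>0$ be the reactance of a transmission line $k$, and let $0\le x_{k,V}^{\min}\le x_{k,V}^{\max}$ be the minimum and maximum reactance of a continuously variable series reactor (CVSR) that may be installed on line $k$. Define $b_k=1/x_k$, $$b_{k,V}^{\min}=-\frac{x_{k,V}^{\max}}{x_k(x_k+x_{k,V}^{\max})},\qquad b_{k,V}^{\max}=-\frac{x_{k,V}^{\min}}{x_k(x_k+x_{k,V}^{\min})},$$ let $\theta_k^{\max}>0$, and set $M_k=|b_{k,V}^{\min}\theta_k^{\max}|$. Let $P_k\in\mathbb{R}$, $\theta_k\in\mathbb{R}$ with $|\theta_k|\le\theta_k^{\max}$, and $\delta_k\in\{0,1\}$. Then the following are equivalent: (i) (nonlinear DC power flow with CVSR) there exists $b_k^V$ with $b_{k,V}^{\min}\le b_k^V\le b_{k,V}^{\max}$ such that $P_k=(b_k+\delta_k b_k^V)\theta_k$; (ii) (mixed integer linear reformulation) there exist $w_k,z_k\in\mathbb{R}$ and $y_k\in\{0,1\}$ such that $P_k=b_k\theta_k+w_k$, $-\delta_k\theta_k^{\max}\le z_k\le\delta_k\theta_k^{\max}$, $\theta_k-(1-\delta_k)\theta_k^{\max}\le z_k\le\theta_k+(1-\delta_k)\theta_k^{\max}$, $-M_ky_k+z_kb_{k,V}^{\min}\le w_k\le z_kb_{k,V}^{\max}+M_ky_k$, and $-M_k(1-y_k)+z_kb_{k,V}^{\max}\le w_k\le z_kb_{k,V}^{\min}+M_k(1-y_k)$.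
   Context: In the DC power flow model, a CVSR inserted in series on line $k$ adds a reactance $x_k^V\in[x_{k,V}^{\min},x_{k,V}^{\max}]$, so the line's susceptance becomes $-1/(x_k+x_k^V)=-(b_k+b_k^V)$ with $b_k=1/x_k$ and $b_k^V=-x_k^V/(x_k(x_k+x_k^V))$; the stated $b_{k,V}^{\min},b_{k,V}^{\max}$ are the resulting bounds on $b_k^V$. The binary $\delta_k=1$ means a CVSR is installed on line $k$, $\theta_k$ is the voltage angle difference across line $k$, and $P_k$ is the active power flow on line $k$. *)

(* Defs.v *)
From Stdlib Require Import Reals Lra.
Open Scope R_scope.

Definition bline (x : R) : R := / x.

Definition bV_of (x xV : R) : R := - xV / (x * (x + xV)).

Definition bVmin (x xVmax : R) : R := bV_of x xVmax.
Definition bVmax (x xVmin : R) : R := bV_of x xVmin.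

Definition bigM (x xVmax thmax : R) : R := Rabs (bVmin x xVmax * thmax).

(* Main.v *)
Require Import Defs.
From Stdlib Require Import Reals Lra Psatz.
Open Scope R_scope.

Lemma bV_eq x v : 0 < x -> 0 <= v -> bV_of x v = / (x + v) - / x.
Proof. intros. unfold bV_of. field. lra. Qed.

Lemma bV_mono x v1 v2 : 0 < x -> 0 <= v1 -> v1 <= v2 -> bV_of x v2 <= bV_of x v1.
Proof.
  intros. rewrite !bV_eq; try lra.
  assert (/ (x + v2) <= / (x + v1)) by (apply Rinv_le_contravar; lra). lra.
Qed.

Lemma bV_nonpos x v : 0 < x -> 0 <= v -> bV_of x v <= 0.
Proof.
  intros. pose proof (bV_mono x 0 v H ltac:(lra) H0).
  unfold bV_of at 2 in H1. replace (-0 / (x*(x+0))) with 0 in H1 by (field; lra). lra.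
Qed.

Theorem mainTheorem1 (x xVmin xVmax thmax P theta delta : R)
  (hx : 0 < x) (hmin : 0 <= xVmin) (hminmax : xVmin <= xVmax)
  (hth : 0 < thmax) (htheta : Rabs theta <= thmax)
  (hdelta : delta = 0 \/ delta = 1) :
  (exists bV : R,
      bVmin x xVmax <= bV <= bVmax x xVmin /\
      P = (bline x + delta * bV) * theta)
  <->
  (exists w z y : R,
      (y = 0 \/ y = 1) /\
      P = bline x * theta + w /\
      - delta * thmax <= z <= delta * thmax /\
      theta - (1 - delta) * thmax <= z <= theta + (1 - delta) * thmax /\
      - bigM x xVmax thmax * y + z * bVmin x xVmax <= w
        <= z * bVmax x xVmin + bigM x xVmax thmax * y /\
      - bigM x xVmax thmax * (1 - y) + z * bVmax x xVmin <= w
        <= z * bVmin x xVmax + bigM x xVmax thmax * (1 - y)).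
Proof.
  assert (hac : bVmin x xVmax <= bVmax x xVmin) by (apply bV_mono; lra).
  assert (hc : bVmax x xVmin <= 0) by (apply bV_nonpos; lra).
  assert (hM : bigM x xVmax thmax = - bVmin x xVmax * thmax).
  { unfold bigM. rewrite Rabs_left1; [lra|]. nra. }
  rewrite hM. unfold Rabs in htheta. destruct (Rcase_abs theta) as [Ht|Ht];
  set (a := bVmin x xVmax) in *; set (c := bVmax x xVmin) in *; set (b := bline x) in *;
  clearbody a c b.
  -
    destruct hdelta; subst delta; split.
    + intros [bV [Hb HP]]. exists 0, 0, 0. repeat split; nra.
    + intros (w & z & y & Hy & HP & H1 & H2 & H3 & H4).
      assert (z = 0) by lra. subst z.
      assert (w = 0) by (destruct Hy; subst; nra). subst w.
      exists a. split; [lra|]. rewrite HP. ring.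
    + intros [bV [Hb HP]]. exists (bV*theta), theta, 1. repeat split; nra.
    + intros (w & z & y & Hy & HP & H1 & H2 & H3 & H4).
      assert (z = theta) by lra. subst z.
      exists (w/theta). assert (Hw : w = (w/theta)*theta) by (field; lra).
      set (q := w/theta) in *. clearbody q. subst w.
      split; [|rewrite HP; ring].
      destruct Hy; subst; split; nra.
  - destruct hdelta; subst delta; split.
    + intros [bV [Hb HP]]. exists 0, 0, 0. repeat split; nra.
    + intros (w & z & y & Hy & HP & H1 & H2 & H3 & H4).
      assert (z = 0) by lra. subst z.
      assert (w = 0) by (destruct Hy; subst; nra). subst w.
      exists a. split; [lra|]. rewrite HP. ring.
    + intros [bV [Hb HP]]. exists (bV*theta), theta, 0. repeat split; nra.
    + intros (w & z & y & Hy & HP & H1 & H2 & H3 & H4).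
      assert (z = theta) by lra. subst z.
      destruct (Req_dec theta 0) as [H0|H0].
      * subst theta. assert (w = 0) by (destruct Hy; subst; nra). exists a. split; [lra|]. rewrite HP. subst w. ring.
      * exists (w/theta). assert (Hw : w = (w/theta)*theta) by (field; lra).
        set (q := w/theta) in *. clearbody q. subst w.
        split; [|rewrite HP; ring].
        assert (0 < theta) by lra.
        destruct Hy; subst; split; nra.
Qed.
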